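(* Define integers $\lambda_r$ for $r\ge 1$ by $\lambda_1=1$ and $\lambda_r = 2\left(3^{\lceil r/2 \rceil}+1\right)\lambda_{\lceil r/2 \rceil}$ for $r \ge 2$. Then for every integer $t\ge 0$, $\lambda_{2^t} = 2^{t-1}\left(3^{2^t}-1\right)$. Consequently, for every $n$ of the form $n=3^{2^t}$ with $t\ge 0$ an integer, $g(n,3) \le \frac{1}{2}\, n\log_3 n$.
   Context: For integers $2\le k\le n$, let $S_n$ denote the set of permutations of $[n]=\{1,\dots,n\}$ (written as sequences), and $S_{n,k}$ the set of all sequences of $k$ distinct elements of $[n]$. A sequence $\kappa\in S_{n,k}$ is a subsequence of a permutation $\pi\in S_n$ if its elements appear in $\pi$ in the same relative order as in $\kappa$. A perfect sequence covering array ${\rm PSCA}(n,k)$ with multiplicity $\lambda$ (a positive integer) is a multiset $X$ of elements of $S_n$ such that every $\kappa\in S_{n,k}$ is a subsequence of exactly $\lambda$ elements of $X$ (counted with multiplicity). $g(n,k)$ denotes the smallest $\lambda$ for which a ${\rm PSCA}(n,k)$ with multiplicity $\lambda$ exists. *)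

(* Defs.v *)
From HB Require Import structures.
From mathcomp Require Import all_boot all_order all_algebra all_fingroup.
From mathcomp Require Import perm.
From Stdlib Require Import ClassicalEpsilon.
Set Implicit Arguments. Unset Strict Implicit. Unset Printing Implicit Defensive.

Definition perm_seq (n : nat) (pi : {perm 'I_n}) : seq 'I_n :=
  [seq pi i | i <- enum 'I_n].

Definition subseq_of_perm (n : nat) (kappa : seq 'I_n) (pi : {perm 'I_n}) : bool :=
  subseq kappa (perm_seq pi).

(* X (a multiset of permutations, given as a list) is a PSCA(n,k) with
   multiplicity lam: every sequence of k distinct elements of [n] is a
   subsequence of exactly lam elements of X (counted with multiplicity). *)
Definition is_PSCA (n k lam : nat) (X : seq {perm 'I_n}) : Prop :=
  forall kappa : k.-tuple 'I_n, uniq kappa ->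
    seq.count (fun pi => subseq_of_perm (val kappa) pi) X = lam.

Definition PSCA_mult (n k lam : nat) : Prop :=
  0 < lam /\ exists X : seq {perm 'I_n}, @is_PSCA n k lam X.

Definition PSCA_multb (n k : nat) : pred nat :=
  fun lam => if excluded_middle_informative (PSCA_mult n k lam) then true else false.

(* g(n,k) = the smallest multiplicity of a PSCA(n,k)
   (set to 0 by convention if no PSCA existed; for 2 <= k <= n one always exists). *)
Definition g (n k : nat) : nat :=
  match excluded_middle_informative (exists lam, PSCA_multb n k lam) with
  | left h => ex_minn h
  | right _ => 0
  end.

(* Main.v *)
Require Import Defs.
From HB Require Import structures.
From mathcomp Require Import all_boot all_order all_algebra all_fingroup.
From mathcomp Require Import all_field.
From mathcomp Require Import zify ring lra.
From Stdlib Require Import ClassicalEpsilon.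
Import Order.TTheory GRing.Theory Num.Theory.
Set Implicit Arguments. Unset Strict Implicit. Unset Printing Implicit Defensive.

Definition ord_ok (T : finType) (r : T -> nat) := injective r /\ forall x, r x < #|T|.
Definition trip (T : finType) (x y z : T) (r : T -> nat) : bool := (r x < r y) && (r y < r z).
Definition PSCAr (T : finType) (lam : nat) (X : seq (T -> nat)) :=
  (forall r, List.In r X -> ord_ok r) /\
  forall x y z : T, x != y -> y != z -> x != z -> count (trip x y z) X = lam.

Lemma nat3 A B C : A != B -> B != C -> A != C ->
  ((A < B) : nat) = ((A<B)&&(B<C)) + ((A<C)&&(C<B)) + ((C<A)&&(A<B)).
Proof.
move=> h1 h2 h3.
case: (ltngtP A B) h1 => h4 h1; case: (ltngtP B C) h2 => h5 h2;
case: (ltngtP A C) h3 => h6 h3 //=; lia.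
Qed.

Lemma count_eq3 (A : Type) (X : seq A) (P Q1 Q2 Q3 : pred A) :
  (forall r, List.In r X -> (P r : nat) = Q1 r + Q2 r + Q3 r) ->
  count P X = count Q1 X + count Q2 X + count Q3 X.
Proof.
elim: X => //= r X IH H.
rewrite IH; last by move=> r' h; apply: H; right.
rewrite H; last by left.
lia.
Qed.

Lemma pair_count (T : finType) lam X (a b : T) : PSCAr lam X -> 2 < #|T| -> a != b ->
  count (fun r => r a < r b) X = 3 * lam.
Proof.
move=> [Hok Hc] h3 ab.
have [c /andP[ca cb]] : exists c, (c != a) && (c != b).
  case: (pickP (fun c => (c != a) && (c != b))) => [c Hc'|H]; first by exists c.
  exfalso; suff: #|T| <= 2 by rewrite leqNgt h3.
  rewrite -cardsT; apply: leq_trans (subset_leq_card (_ : [set: T] \subset [set a; b])) _.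
    apply/subsetP => x _; rewrite !inE; move: (H x) => /=.
    by case: eqP; case: eqP.
  by rewrite cards2; case: (_ == _).
rewrite (@count_eq3 _ _ _ (trip a b c) (trip a c b) (trip c a b)).
  rewrite !Hc //; try lia; try by rewrite eq_sym.
move=> r /Hok [ri _]; rewrite /trip; apply: nat3; rewrite (inj_eq ri) //;
by rewrite eq_sym.
Qed.

Lemma sum_count (A : Type) (s : seq A) (P : pred A) :
  \sum_(a <- s) (P a : nat) = count P s.
Proof. by elim: s => [|a s IH]; rewrite ?big_nil ?big_cons //= IH. Qed.

Lemma eq_sum_In (A : Type) (s : seq A) (f g : A -> nat) :
  (forall a, List.In a s -> f a = g a) -> \sum_(a <- s) f a = \sum_(a <- s) g a.
Proof.
elim: s => [|a s IH] H; rewrite ?big_nil ?big_cons //.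
rewrite H; last by left. by rewrite IH // => b hb; apply: H; right.
Qed.

Lemma count_flatten_map (A B : Type) (P : pred B) (G : A -> seq B) s :
  count P (flatten [seq G a | a <- s]) = \sum_(a <- s) count P (G a).
Proof. by elim: s => [|a s IH]; rewrite ?big_nil ?big_cons //= count_cat IH. Qed.

Lemma In_flatten_map (A B : Type) (G : A -> seq B) s r :
  List.In r (flatten [seq G a | a <- s]) -> exists a, List.In a s /\ List.In r (G a).
Proof.
elim: s => [|a s IH] //= /List.in_app_iff [h|h]; first by exists a; split => //; left.
by case: (IH h) => b [h1 h2]; exists b; split => //; right.
Qed.

Lemma subseq_cons_uniq (T : eqType) (a : T) k s : uniq s -> a \in s ->
  subseq (a :: k) s = subseq k (drop (index a s).+1 s).
Proof.
elim: s => //= y s IH /andP[ys us]; rewrite in_cons.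
case: (eqVneq a y) => [ea _|ne /= ias]; first by rewrite drop0.
by rewrite IH.
Qed.

Lemma mem_drop_uniq (T : eqType) (x : T) k s : uniq s -> x \in s ->
  (x \in drop k s) = (k <= index x s).
Proof.
move=> us xs.
have := cat_uniq (take k s) (drop k s); rewrite cat_take_drop us => /esym/and3P[_ hd _].
have Ht := in_take k xs.
have xtd : (x \in take k s) || (x \in drop k s) by rewrite -mem_cat cat_take_drop.
case xt: (x \in take k s).
  move: (xt); rewrite Ht => hlt; rewrite leqNgt hlt.
  apply/negP => xd; move: hd => /negP; apply; apply/hasP; by exists x.
move: (xt); rewrite Ht => /negbT; rewrite -leqNgt => ->.
by move: xtd; rewrite xt.
Qed.

Lemma index_drop_uniq (T : eqType) (x : T) k s : uniq s -> x \in drop k s ->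
  index x (drop k s) + k = index x s.
Proof.
move=> us xd.
have xs : x \in s by rewrite -(cat_take_drop k s) mem_cat xd orbT.
have hk : k <= size s.
  by rewrite leqNgt; apply/negP => h; move: xd; rewrite drop_oversize // ltnW.
have := cat_uniq (take k s) (drop k s); rewrite cat_take_drop us => /esym/and3P[_ hd _].
have xt : x \notin take k s by move: hd; apply: contra => xt; apply/hasP; exists x.
by rewrite -{2}(cat_take_drop k s) index_cat (negbTE xt) size_takel // addnC.
Qed.

Lemma subseq3 (T : eqType) (a b c : T) s : uniq s -> a \in s -> b \in s -> c \in s ->
  subseq [:: a; b; c] s = (index a s < index b s) && (index b s < index c s).
Proof.
move=> us aS bS cS.
rewrite subseq_cons_uniq //.
set t := drop _ s.
have ut : uniq t by apply: drop_uniq.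
case bt: (b \in t); last first.
  have -> : subseq [:: b; c] t = false.
    apply/negbTE; apply: contraFN bt => /mem_subseq; apply; by rewrite inE eqxx.
  by move: bt; rewrite /t mem_drop_uniq // => ->.
move: (bt); rewrite /t mem_drop_uniq // => ->/=.
rewrite subseq_cons_uniq // sub1seq /t drop_drop.
have := index_drop_uniq us bt; rewrite /t addSn => ->.
by rewrite mem_drop_uniq.
Qed.

Lemma nat_lex A B C D m : B < m -> D < m ->
  (A * m + B < C * m + D) = (A < C) || ((A == C) && (B < D)).
Proof.
move=> hB hD; case: (ltngtP A C) => h /=.
- apply: (leq_trans (n := A.+1 * m)); first by rewrite mulSn; lia.
  apply: leq_trans (leq_addr _ _); by rewrite leq_mul2r h orbT.
- apply/negbTE; rewrite -leqNgt.
  apply: (leq_trans (n := C.+1 * m)); first by rewrite mulSn; lia.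
  apply: leq_trans (leq_addr _ _); by rewrite leq_mul2r h orbT.
- by subst; rewrite ltn_add2l.
Qed.

Lemma nat_lex_eq A B C D m : B < m -> D < m ->
  A * m + B = C * m + D -> A = C /\ B = D.
Proof.
move=> hB hD e.
have h1 := nat_lex A C hB hD; have h2 := nat_lex C A hD hB.
rewrite e ltnn in h1; rewrite e ltnn in h2.
case: (ltngtP A C) h1 h2 => //= h _ _; subst; split => //; lia.
Qed.

Section Step.
Variable F : finFieldType.
Local Notation m := #|F|.

Definition Lf (d : option F) (p : F * F) : F :=
  if d is Some a then (p.2 - a * p.1)%R else p.1.
Definition Qf (d : option F) (p : F * F) : F := if d is Some a then p.1 else p.2.
Definition Rk (d : option F) (al be : F -> nat) (p : F * F) : nat :=
  al (Lf d p) * m + be (Qf d p).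
Definition revr (al : F -> nat) x := m - (al x).+1.
Definition stepX (Y : seq (F -> nat)) : seq (F * F -> nat) :=
  flatten [seq flatten [seq [:: Rk d al al; Rk d al (revr al)] | al <- Y]
          | d <- index_enum (option F)].

Lemma LQ_inj d p p' : Lf d p = Lf d p' -> Qf d p = Qf d p' -> p = p'.
Proof.
case: d p p' => [a|] [x y] [x' y'] /=; last by move=> -> ->.
move=> e ex; subst x'; congr pair.
by move/(congr1 (fun u => u + a * x)%R): e; rewrite !subrK.
Qed.

Lemma revr_ok al : ord_ok al -> ord_ok (revr al).
Proof.
move=> [ai ab]; split.
  move=> x y; rewrite /revr => e; apply: ai.
  have h1 : al x < m := ab x; have h2 : al y < m := ab y; lia.
move=> x; rewrite /revr; have h1 : al x < m := ab x.
suff : m - (al x).+1 < m by []. lia.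
Qed.

Lemma revr_lt al u v : ord_ok al -> (revr al u < revr al v) = (al v < al u).
Proof.
move=> [_ ab]; rewrite /revr; have h1 : al u < m := ab u; have h2 : al v < m := ab v.
apply/idP/idP; lia.
Qed.

Lemma Rk_lt d al be u v : ord_ok al -> ord_ok be ->
  (Rk d al be u < Rk d al be v) =
  (al (Lf d u) < al (Lf d v)) || ((Lf d u == Lf d v) && (be (Qf d u) < be (Qf d v))).
Proof.
move=> [ai ab] [bi bb]; rewrite /Rk nat_lex //; by rewrite (inj_eq ai).
Qed.

Lemma Rk_ok d al be : ord_ok al -> ord_ok be -> ord_ok (Rk d al be).
Proof.
move=> [ai ab] [bi bb]; split.
  move=> u v; rewrite /Rk => e.
  have [e1 e2] := nat_lex_eq (bb (Qf d u)) (bb (Qf d v)) e.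
  exact: LQ_inj (ai _ _ e1) (bi _ _ e2).
move=> u; have h1 : al (Lf d u) < m := ab _; have h2 : be (Qf d u) < m := bb _.
suff : al (Lf d u) * m + be (Qf d u) < m * m by rewrite card_prod.
apply: (leq_trans (n := (al (Lf d u)).+1 * m)); first by rewrite mulSn; lia.
by rewrite leq_mul2r h1 orbT.
Qed.

Definition lexc (al be : F -> nat) (l1 q1 l2 q2 : F) : bool :=
  (al l1 < al l2) || ((l1 == l2) && (be q1 < be q2)).
Definition tt3 (lx ly lz qx qy qz : F) al be :=
  lexc al be lx qx ly qy && lexc al be ly qy lz qz.

Lemma dir_abs Y lam (HY : PSCAr lam Y) (m3 : 2 < m) (lx ly lz qx qy qz : F) :
  (lx = ly -> qx != qy) -> (ly = lz -> qy != qz) -> (lx = lz -> qx != qz) ->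
  \sum_(al <- Y) (tt3 lx ly lz qx qy qz al al + tt3 lx ly lz qx qy qz al (revr al))
     + 2 * lam * (lx == lz) = 2 * lam + lam * (lx == ly) + lam * (ly == lz).
Proof.
move: (HY) => [Hok Hc] hxy hyz hxz.
rewrite /tt3 /lexc.
case: (eqVneq lx ly) => [exy|nxy]; case: (eqVneq ly lz) => [eyz|nyz];
  case: (eqVneq lx lz) => [exz|nxz] //=.
- (* all equal *)
  subst; move: (hxy erefl) (hyz erefl) (hxz erefl) => a1 a2 a3.
  rewrite (@eq_sum_In _ _ _ (fun al => trip qx qy qz al + trip qz qy qx al)).
    by rewrite big_split /= !sum_count !Hc // 1?eq_sym //; lia.
  move=> al /Hok h; rewrite /trip !revr_lt // ltnn /=; congr (_ + _).
  by rewrite andbC.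
- by subst; rewrite eqxx in nxz.
- by subst; rewrite eqxx in nyz.
- (* lx = ly <> lz *)
  subst; move: (hxy erefl) => a1.
  rewrite (@eq_sum_In _ _ _ (fun al => (al ly < al lz) : nat)).
    by rewrite sum_count (pair_count HY) //; lia.
  move=> al /Hok h; rewrite !revr_lt // ltnn /=.
  move: h => [ai _]; have : al qx != al qy by rewrite (inj_eq ai).
  by case: (ltngtP (al qx) (al qy)); case: (al ly < al lz).
- by subst; rewrite eqxx in nxy.
- (* ly = lz <> lx *)
  subst; move: (hyz erefl) => a1.
  rewrite (@eq_sum_In _ _ _ (fun al => (al lx < al lz) : nat)).
    by rewrite sum_count (pair_count HY) //; lia.
  move=> al /Hok h; rewrite !revr_lt // ltnn /=.
  move: h => [ai _]; have : al qy != al qz by rewrite (inj_eq ai).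
  by case: (ltngtP (al qy) (al qz)); case: (al lx < al lz).
- (* lx = lz <> ly *)
  subst.
  rewrite (@eq_sum_In _ _ _ (fun al => 0)).
    rewrite (_ : \sum_(al <- Y) 0 = 0); last by elim: (Y) => [|a s IH]; rewrite ?big_nil ?big_cons ?IH.
    lia.
  move=> al _; rewrite !orbF; case: ltngtP => //=; lia.
- (* all distinct *)
  rewrite (@eq_sum_In _ _ _ (fun al => 2 * trip lx ly lz al)).
    by rewrite -big_distrr /= sum_count Hc //; lia.
  by move=> al _; rewrite /trip !orbF; lia.
Qed.

Definition d0 (u v : F * F) : option F :=
  if u.1 == v.1 then None else Some ((u.2 - v.2) / (u.1 - v.1))%R.

Lemma Lf_eq u v d : u != v -> (Lf d u == Lf d v) = (d == d0 u v).
Proof.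
case: u v => [x y] [x' y'] ne; rewrite /d0 /=; case: d => [a|] /=.
- case: (eqVneq x x') => [ex|nx] /=.
    subst x'; apply/negbTE; apply: contra ne => /eqP e; apply/eqP; congr pair.
    by move/(congr1 (fun u => u + a * x)%R): e; rewrite !subrK.
  have nx0 : (x - x')%R != 0%R by rewrite subr_eq0.
  apply/eqP/eqP => e.
    have e2 : (a * (x - x') = y - y')%R.
      by move/eqP: e; rewrite -subr_eq0 => /eqP e; rewrite -[RHS]subr0 -e; ring.
    by rewrite -e2 mulfK.
  case: e => ->; field.
  exact: nx0.
- by case: eqVneq.
Qed.

Lemma sum_Lf u v (c : nat) : u != v ->
  \sum_(d : option F) c * (Lf d u == Lf d v) = c.
Proof.
move=> ne; rewrite (bigD1 (d0 u v)) //= Lf_eq // eqxx muln1 big1 ?addn0 //.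
by move=> d nd; rewrite Lf_eq // (negbTE nd) muln0.
Qed.

Lemma stepP Y lam : 2 < m -> PSCAr lam Y -> PSCAr (2 * (m + 1) * lam) (stepX Y).
Proof.
move=> m3 HY; move: (HY) => [Hok Hc]; split.
  move=> r hr0; case: (In_flatten_map hr0) => d [_ hr2].
  case: (In_flatten_map hr2) => al [/Hok hal hr].
  case: hr => [<-|[<-|[]]]; apply: Rk_ok => //; exact: revr_ok.
move=> x y z nxy nyz nxz.
rewrite /stepX count_flatten_map.
have E : forall d, count (trip x y z)
   (flatten [seq [:: Rk d al al; Rk d al (revr al)] | al <- Y]) =
   \sum_(al <- Y) (tt3 (Lf d x) (Lf d y) (Lf d z) (Qf d x) (Qf d y) (Qf d z) al al
     + tt3 (Lf d x) (Lf d y) (Lf d z) (Qf d x) (Qf d y) (Qf d z) al (revr al)).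
  move=> d; rewrite count_flatten_map; apply: eq_sum_In => al /Hok h.
  have hr := revr_ok h.
  by rewrite /= addn0 /trip /tt3 /lexc !Rk_lt.
rewrite (eq_bigr _ (fun d _ => E d)).
have K : forall d,
  \sum_(al <- Y) (tt3 (Lf d x) (Lf d y) (Lf d z) (Qf d x) (Qf d y) (Qf d z) al al
     + tt3 (Lf d x) (Lf d y) (Lf d z) (Qf d x) (Qf d y) (Qf d z) al (revr al))
  + 2 * lam * (Lf d x == Lf d z)
  = 2 * lam + lam * (Lf d x == Lf d y) + lam * (Lf d y == Lf d z).
  move=> d; apply: dir_abs => // e.
  - by apply: contra nxy => /eqP e2; apply/eqP; exact: LQ_inj e e2.
  - by apply: contra nyz => /eqP e2; apply/eqP; exact: LQ_inj e e2.
  - by apply: contra nxz => /eqP e2; apply/eqP; exact: LQ_inj e e2.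
have S := @eq_bigr _ 0 addn (option F) (index_enum _) xpredT _ _ (fun d _ => K d).
rewrite !big_split /= !sum_Lf // in S.
rewrite sum_nat_const card_option in S.
rewrite big1_eq in S; move: S; rewrite addn1; set M := #|F|; set T := \sum_i _; lia.
Qed.

End Step.

Definition baseX : seq ('I_3 -> nat) :=
  [seq (fun i : 'I_3 => nth 0 s i) | s <- [:: [::0;1;2]; [::0;2;1]; [::1;0;2];
      [::1;2;0]; [::2;0;1]; [::2;1;0]]].

Lemma baseP : PSCAr 1 baseX.
Proof.
split.
  move=> r hr; split; last first.
    move=> x; rewrite card_ord.
    by move: hr => /= [<-|[<-|[<-|[<-|[<-|[<-|[]]]]]]]; case: x => [[|[|[|x]]] Hx].
  by move: hr => /= [<-|[<-|[<-|[<-|[<-|[<-|[]]]]]]];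
    move=> [[|[|[|x]]] Hx] [[|[|[|y]]] Hy] //= _; apply: val_inj.
by move=> [[|[|[|x]]] Hx] [[|[|[|y]]] Hy] [[|[|[|z]]] Hz].
Qed.

Lemma transport (T U : finType) lam (X : seq (T -> nat)) : #|T| = #|U| -> PSCAr lam X ->
  exists X' : seq (U -> nat), PSCAr lam X'.
Proof.
move=> E [Hok Hc].
pose f (u : U) : T := enum_val (cast_ord (esym E) (enum_rank u)).
have fi : injective f.
  move=> u v; rewrite /f => /enum_val_inj /cast_ord_inj; exact: enum_rank_inj.
exists (map (fun r => r \o f) X); split.
  move=> r' /List.in_map_iff [r [<- /Hok [ri rb]]]; split.
    by move=> u v /= /ri /fi.
  by move=> u /=; rewrite -E.
move=> x y z nxy nyz nxz; rewrite count_map; apply: Hc; by rewrite (inj_eq fi).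
Qed.

Definition mkperm n (f : 'I_n -> 'I_n) : {perm 'I_n} :=
  match @injectiveP _ _ f with ReflectT h => perm h | ReflectF _ => 1%g end.

Lemma mkpermE n (f : 'I_n -> 'I_n) : injective f -> mkperm f =1 f.
Proof.
rewrite /mkperm; case: injectiveP => // h _ x; by rewrite permE.
Qed.

Lemma eq_count_In (A : Type) (s : seq A) (P Q : pred A) :
  (forall a, List.In a s -> P a = Q a) -> count P s = count Q s.
Proof.
elim: s => //= a s IH H; rewrite H; last by left.
by rewrite IH // => b hb; apply: H; right.
Qed.

Lemma to_perm n lam X : PSCAr (T := 'I_n) lam X ->
  exists X0 : seq {perm 'I_n}, @is_PSCA n 3 lam X0.
Proof.
move=> [Hok Hc].
pose sg (r : 'I_n -> nat) : 'I_n -> 'I_n := fun i => insubd i (r i).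
pose pi r := ((mkperm (sg r))^-1)%g.
have sgi : forall r, ord_ok r -> injective (sg r).
  move=> r [ri rb] u v; rewrite /sg => /(congr1 val); rewrite !val_insubd.
  have := rb u; have := rb v; rewrite card_ord => -> ->; exact: ri.
have idx : forall r a, ord_ok r ->
    index a [seq pi r i | i <- enum 'I_n] = r a.
  move=> r a hr; rewrite -{1}(permK (mkperm (sg r)) a) -/(pi r).
  rewrite index_map ?index_enum_ord; last exact: perm_inj.
  rewrite mkpermE; last exact: sgi.
  rewrite /sg val_insubd; case: hr => _ rb; have := rb a; rewrite card_ord => ->; done.
have mem : forall r a, a \in [seq pi r i | i <- enum 'I_n].
  move=> r a; apply/mapP; exists (mkperm (sg r) a); first by rewrite mem_enum.
  by rewrite /pi permK.
exists (map pi X) => kappa uk.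
case: kappa uk => [[|a [|b [|c [|]]]] //= sz] uk.
move: (uk); rewrite /= !inE negb_or => /and3P[/andP[nab nac] nbc _].
rewrite count_map -(Hc a b c nab nbc nac).
apply: eq_count_In => r hr /=.
rewrite /subseq_of_perm /perm_seq subseq3 ?mem //.
  by rewrite /trip !idx //; exact: Hok.
by rewrite map_inj_uniq ?enum_uniq //; exact: perm_inj.
Qed.

Section Main.
Variable lam : nat -> nat.
Hypothesis lam1 : lam 1 = 1.
Hypothesis lamS : forall r, 2 <= r -> lam r = 2 * (3 ^ uphalf r + 1) * lam (uphalf r).

Lemma up2 t : uphalf (2 ^ t.+1) = 2 ^ t.
Proof. by rewrite expnS mul2n uphalf_double. Qed.

Lemma two_le t : 2 <= 2 ^ t.+1.
Proof. by rewrite expnS -[X in X <= _]muln1 leq_mul2l expn_gt0. Qed.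

Lemma lam_nat t : 2 * lam (2 ^ t) = 2 ^ t * (3 ^ (2 ^ t) - 1).
Proof.
elim: t => [|t IH]; first by rewrite expn0 lam1.
rewrite lamS ?two_le // up2.
have e : 3 ^ 2 ^ t.+1 = 3 ^ 2 ^ t * 3 ^ 2 ^ t by rewrite expnS mul2n -addnn expnD.
rewrite e.
have M1 : 1 <= 3 ^ 2 ^ t by rewrite expn_gt0.
move: IH M1; set L := lam _; set M := 3 ^ 2 ^ t; set P := 2 ^ t.
rewrite (expnS 2 t) -/P => IH M1.
nia.
Qed.

Lemma chain t : exists X : seq ('I_(3 ^ (2 ^ t)) -> nat), PSCAr (lam (2 ^ t)) X.
Proof.
elim: t => [|t [X HX]]; first by exists baseX; rewrite [in lam _]expn0 lam1; exact: baseP.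
have [F _ cF] := @pPrimePowerField 3 (2 ^ t) isT (expn_gt0 _ _).
have E1 : #|'I_(3 ^ (2 ^ t))| = #|F| by rewrite card_ord cF.
have [Y HY] := @transport _ F _ X E1 HX.
have m3 : 2 < #|F| by rewrite cF (leq_exp2l 1 (2 ^ t) (isT : 1 < 3)) expn_gt0.
have HZ := stepP m3 HY.
have E2 : #|{: F * F}| = #|'I_(3 ^ (2 ^ t.+1))|.
  by rewrite card_prod card_ord cF expnS mul2n -addnn expnD.
have [Z HZ'] := @transport _ ('I_(3 ^ (2 ^ t.+1))) _ _ E2 HZ.
by exists Z; rewrite lamS ?two_le // up2 -cF.
Qed.

End Main.

Unset Implicit Arguments.
Set Strict Implicit.

Theorem mainTheorem6 (lam : nat -> nat)
  (lam1 : lam 1 = 1)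
  (lamS : forall r, 2 <= r -> lam r = 2 * (3 ^ uphalf r + 1) * lam (uphalf r)) :
  (forall t : nat,
     ((lam (2 ^ t)%N)%:R = (2%:R)^-1 * (2 ^ t)%N%:R * ((3 ^ (2 ^ t))%N%:R - 1) :> rat)%R)
  /\
  (forall t n : nat, n = 3 ^ (2 ^ t) ->
     ((g n 3)%:R <= (2%:R)^-1 * n%:R * (trunc_log 3 n)%:R :> rat)%R).
Proof.
have P1 : forall t : nat,
     ((lam (2 ^ t)%N)%:R = (2%:R)^-1 * (2 ^ t)%N%:R * ((3 ^ (2 ^ t))%N%:R - 1) :> rat)%R.
  move=> t; have := lam_nat lam1 lamS t.
  have M1 : 1 <= 3 ^ 2 ^ t by rewrite expn_gt0.
  move: M1; set L := lam _; set M := 3 ^ 2 ^ t; set P := 2 ^ t => M1.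
  move/(congr1 (fun k => k%:R : rat)); rewrite !natrM natrB //= => e.
  lra.
split => // t n ->.
rewrite trunc_expnK //.
have gle : g (3 ^ 2 ^ t) 3 <= lam (2 ^ t).
  have [X HX] := chain lam1 lamS t.
  have [X0 H0] := to_perm HX.
  have pos : 0 < lam (2 ^ t).
    have := lam_nat lam1 lamS t.
    have M3 : 3 <= 3 ^ 2 ^ t by rewrite (leq_exp2l 1 (2 ^ t) (isT : 1 < 3)) expn_gt0.
    have P1' : 0 < 2 ^ t by rewrite expn_gt0.
    move: M3 P1'; set L := lam _; set M := 3 ^ 2 ^ t; set P := 2 ^ t; nia.
  have hb : PSCA_multb (3 ^ 2 ^ t) 3 (lam (2 ^ t)).
    rewrite /PSCA_multb; case: excluded_middle_informative => // [[]].
    by split => //; exists X0.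
  rewrite /g; case: excluded_middle_informative => [h|//].
  by case: ex_minnP => k _ Hk; apply: Hk.
have h1 : ((g (3 ^ 2 ^ t)%N 3)%:R <= (lam (2 ^ t)%N)%:R :> rat)%R by rewrite ler_nat.
apply: le_trans h1 _.
rewrite P1.
have : (0 <= (2 ^ t)%N%:R :> rat)%R by rewrite ler0n.
set P := ((2 ^ t)%N%:R)%R; set M := ((3 ^ 2 ^ t)%N%:R)%R.
nra.
Qed.
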